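(* Let $f$ be a pdf supported on $[-\tfrac14,\tfrac14]$. Then $$2\big(\mathrm{Re}\,\hat f(1)\big)^2-1\le\mathrm{Re}\,\hat f(2)\le 2\,\mathrm{Re}\,\hat f(1)-1.$$
   Context: $\mathbb{T}=\mathbb{R}/\mathbb{Z}$; $\hat f(j)=\int_{\mathbb{T}} f(x)e^{-2\pi ijx}\,dx$. A pdf is a nonnegative function in $L^2(\mathbb{T})$ with integral 1; $[-\tfrac14,\tfrac14]$ is regarded as a subset of $\mathbb{T}$. *)

(* Defs.v *)
(* The torus T = R/Z is modelled by its fundamental
   domain [-1/2, 1/2] with Lebesgue measure (endpoints are null). *)
From HB Require Import structures.
From mathcomp Require Import all_boot all_order all_algebra.
From mathcomp Require Import all_classical all_reals all_analysis.
Set Implicit Arguments. Unset Strict Implicit. Unset Printing Implicit Defensive.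
Import Order.TTheory GRing.Theory Num.Theory.
Local Open Scope classical_set_scope.
Local Open Scope ring_scope.

Definition torus_dom (R : realType) : set R := `[(- (1/2)) : R, 1/2]%classic.

Definition re_fourier (R : realType) (f : R -> R) (j : int) : R :=
  Rintegral (@lebesgue_measure R) (@torus_dom R)
    (fun x => f x * cos (2 * pi * j%:~R * x)).

Definition pdf_T (R : realType) (f : R -> R) : Prop :=
  [/\ measurable_fun (@torus_dom R) f,
      (forall x, @torus_dom R x -> 0 <= f x),
      (@lebesgue_measure R).-integrable (@torus_dom R) (fun x => ((f x) ^+ 2)%:E) &
      (\int[@lebesgue_measure R]_(x in @torus_dom R) (f x)%:E = 1)%E].

Definition supported_quarter (R : realType) (f : R -> R) : Prop :=
  forall x, @torus_dom R x -> 1/4 < `|x| -> f x = 0.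

(* Main.v *)
Require Import Defs.
From mathcomp Require Import all_boot all_order all_algebra.
From mathcomp Require Import all_classical all_reals all_analysis.
From mathcomp Require Import ring lra measurable_realfun.
Import Order.TTheory GRing.Theory Num.Theory.
Import numFieldNormedType.Exports.
Local Open Scope ring_scope.

Section S.
Variables (R : realType) (f : R -> R).
Hypothesis pf : pdf_T f.

Let D := @torus_dom R.
Let mu := @lebesgue_measure R.
Definition cc (x : R) := cos (2 * pi * x).

Let mD : measurable D.
Proof. exact: measurable_itv. Qed.

Let mc : measurable_fun D cc.
Proof.
apply: measurable_funTS.
apply: measurableT_comp; first (apply: continuous_measurable_fun; exact: continuous_cos).
apply: measurable_funM => //; exact: measurable_cst.
Qed.

Let fint : mu.-integrable D (EFin \o f).
Proof.
case: pf => mf f0 _ f1; apply/integrableP; split.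
  exact/measurable_EFinP.
have f0' : forall x, D x -> (0 <= (f x)%:E)%E by move=> x Dx; rewrite lee_fin f0.
under eq_integral => x /[!inE] Dx do rewrite /= ger0_norm ?f0 //.
by rewrite f1 ltry.
Qed.

Definition poly a b g x := a * cc x ^+ 2 + b * cc x + g.

Lemma pint a b g : mu.-integrable D (EFin \o (fun x => f x * poly a b g x)).
Proof.
have -> : EFin \o (fun x => f x * poly a b g x) =
   ((EFin \o f) \* (EFin \o poly a b g))%E by apply/funext => x /=; rewrite EFinM.
apply: integrableMl => //.
  rewrite /poly; apply: measurable_funD; last exact: measurable_cst.
  apply: measurable_funD; apply: measurable_funM => //; try exact: measurable_cst.
  exact: measurable_funX.
exists (`|a| + `|b| + `|g|); split; first exact: num_real.
move=> M HM x _ /=.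
apply/ltW/(le_lt_trans _ HM).
have c1 : `|cc x| <= 1 by rewrite ler_norml cos_le1 cos_geN1.
rewrite /poly (le_trans (ler_normD _ _)) // lerD2r (le_trans (ler_normD _ _)) //.
rewrite lerD // normrM ?normrX ler_piMr //.
  by rewrite exprn_ile1.
Qed.

Definition P a b g := Rintegral mu D (fun x => f x * poly a b g x).

Let PZ (a : R) : Rintegral mu D (fun x => a * (f x * poly 1 0 0 x)) = a * P 1 0 0.
Proof. by rewrite RintegralZl //; exact: pint. Qed.
Let PZ2 (a : R) : Rintegral mu D (fun x => a * (f x * poly 0 1 0 x)) = a * P 0 1 0.
Proof. by rewrite RintegralZl //; exact: pint. Qed.
Let PZ3 (a : R) : Rintegral mu D (fun x => a * (f x * poly 0 0 1 x)) = a * P 0 0 1.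
Proof. by rewrite RintegralZl //; exact: pint. Qed.

Lemma Plin a b g : P a b g = a * P 1 0 0 + b * P 0 1 0 + g * P 0 0 1.
Proof.
rewrite /P (@eq_Rintegral _ _ _ mu D (fun x => f x * poly a 0 0 x +
   (f x * poly 0 b 0 x + f x * poly 0 0 g x))); last first.
  by move=> x _; rewrite /poly; ring.
rewrite RintegralD //; first last.
- rewrite (_ : EFin \o _ = EFin \o (fun x => f x * poly 0 b g x)); first exact: pint.
  by apply/funext => x /=; rewrite /poly; congr (_%:E); ring.
- exact: pint.
rewrite RintegralD //; try exact: pint.
rewrite -(PZ a) -(PZ2 b) -(PZ3 g) addrA.
congr (_ + _ + _); apply: eq_Rintegral => x _; rewrite /poly; ring.
Qed.

Lemma P001 : P 0 0 1 = 1.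
Proof.
case: pf => _ _ _ f1.
rewrite /P (@eq_Rintegral _ _ _ mu D f); last by move=> x _; rewrite /poly; ring.
by rewrite /Rintegral f1.
Qed.

End S.
Arguments P {R}.
Arguments Plin {R f}.
Arguments P001 {R f}.
Arguments poly {R}.
Arguments cc {R}.
Arguments pint {R f}.

Theorem lemma2p17 (R : realType) (f : R -> R) :
  pdf_T f -> supported_quarter f ->
  2 * (re_fourier f 1) ^+ 2 - 1 <= re_fourier f 2 /\
  re_fourier f 2 <= 2 * re_fourier f 1 - 1.
Proof.
move=> pf sq.
have [_ f0 _ _] := pf.
have mD : measurable (@torus_dom R) by exact: measurable_itv.
have E1 : re_fourier f 1 = P f 0 1 0.
  apply: eq_Rintegral => x _; rewrite /poly /cc /=.
  have -> : (1%:~R : R) = 1 by [].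
  by rewrite mulr1 mul0r add0r mul1r addr0.
have E2 : re_fourier f 2 = P f 2 0 (-1).
  apply: eq_Rintegral => x _; rewrite /poly /cc /=.
  have -> : (2%:~R : R) = 2 by [].
  have -> : 2 * pi * 2 * x = 2 * pi * x + 2 * pi * x by ring.
  rewrite cosD -expr2 -expr2 (cos2sin2 (2 * pi * x)) -[sin _ ^+ 2](@addKr _ (cos (2 * pi * x) ^+ 2)) cos2Dsin2 .
  ring.
rewrite E1 E2; set a := P f 0 1 0.
have L := Plin pf. have one := P001 pf.
split.
  have H : 0 <= P f 1 (-2 * a) (a ^+ 2).
    apply: Rintegral_ge0 => x Dx.
    rewrite /poly; apply: mulr_ge0; first exact: f0.
    have -> : 1 * cc x ^+ 2 + -2 * a * cc x + a ^+ 2 = (cc x - a) ^+ 2 by ring.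
    exact: sqr_ge0.
  rewrite L one in H; rewrite (L 2) one -/a.
  move: H; rewrite -/a; nra.
have U : P f 2 0 (-1) <= P f 0 2 (-1).
  apply: le_Rintegral => //; try exact: (pint pf).
  move=> x Dx; rewrite /poly.
  case: (lerP `|x| (1/4)) => hx; last by rewrite sq // !mul0r.
  have c0 : 0 <= cc x.
    apply: cos_ge0_pihalf.
    move: hx; rewrite ler_norml => /andP[h1 h2].
    have p0 := pi_gt0 R.
    by apply/andP; split; nra.
  have c1 := cos_le1 (2 * pi * x).
  apply: ler_wpM2l; first exact: f0.
  rewrite /cc in c0 *; nra.
rewrite (L 2 0 (-1)) (L 0 2 (-1)) one -/a in U.
rewrite (L 2 0 (-1)) one -/a; lra.
Qed.
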